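(* Assume $C\succ 0$, $A_1,\dots,A_m$ are linearly independent, and $C^{-1}$ is linearly feasible, i.e. $\mathrm{tr}(A_\ell C^{-1})=b_\ell$ for all $\ell$. Let $X(t)$ be a differentiable solution of the general first-ansatz dynamics $$\mathrm{vec}(\dot X(t)) = G\mathcal{A}^T(\mathcal{A}G\mathcal{A}^T)^{-1}b - \mathrm{vec}(X(t)),\qquad G=\tfrac12\bigl(C^{-1}\otimes X(t) + X(t)\otimes C^{-1}\bigr),$$ with $X(0)\succ 0$ (not necessarily linearly feasible). Then at every time $t$ with $X(t)\succ 0$, $$\frac{d}{dt}\ln\det X(t) = b^T(\mathcal{A}G\mathcal{A}^T)^{-1}b - n \ \ge\ -n,$$ and consequently $X(T)\succ 0$ for every finite $T\ge 0$.
   Context: $C,A_1,\dots,A_m$ are symmetric $n\times n$ matrices and $b\in\mathbb{R}^m$. For an $n\times n$ matrix $M$, $\mathrm{vec}(M)\in\mathbb{R}^{n^2}$ is obtained by stacking the columns of $M$; $\otimes$ is the Kronecker product, with $\mathrm{vec}(ABC)=(C^T\otimes A)\mathrm{vec}(B)$. $\mathcal{A}$ is the $m\times n^2$ matrix whose $\ell$-th row is $\mathrm{vec}(A_\ell)^T$. A matrix $X$ is linearly feasible if $\mathcal{A}\,\mathrm{vec}(X)=b$. *)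

(* Defs.v *)
From HB Require Import structures.
From mathcomp Require Import all_boot all_order all_algebra.
From mathcomp Require Import all_classical all_reals all_analysis.
From mathcomp Require Export mxtens.
Set Implicit Arguments. Unset Strict Implicit. Unset Printing Implicit Defensive.
Import Order.TTheory GRing.Theory Num.Theory.
Local Open Scope ring_scope.

Section Defs.
Variable R : realType.

(* vec M : stacks the columns of M; entry (i, j) of M sits at index j*n + i
   (mxtens_index (j, i)).  With this convention and the standard Kronecker
   product tensmx (A *t B), (mxtens_index (i,k), mxtens_index (j,l)) entry
   = A i j * B k l, one has vec (A B C) = (C^T *t A) vec B. *)
Definition vec (n : nat) (M : 'M[R]_n) : 'cV[R]_(n * n) :=
  \col_k M (mxtens_unindex k).2 (mxtens_unindex k).1.

Definition Amat (m n : nat) (A : 'I_m -> 'M[R]_n) : 'M[R]_(m, n * n) :=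
  \matrix_(l, k) vec (A l) k 0.

Definition lin_feasible (m n : nat) (A : 'I_m -> 'M[R]_n) (b : 'cV[R]_m)
  (M : 'M[R]_n) : Prop := Amat A *m vec M = b.

Definition posdef (n : nat) (M : 'M[R]_n) : Prop :=
  M^T = M /\ forall x : 'cV[R]_n, x != 0 -> 0 < (x^T *m M *m x) 0 0.

Definition lin_indep (m n : nat) (A : 'I_m -> 'M[R]_n) : Prop :=
  forall c : 'I_m -> R, \sum_(l < m) c l *: A l = 0 -> forall l, c l = 0.

Definition Gmat (n : nat) (C X : 'M[R]_n) : 'M[R]_(n * n) :=
  2^-1 *: (invmx C *t X + X *t invmx C).

End Defs.

(* Main.v *)
Require Import Defs.
From HB Require Import structures.
From mathcomp Require Import all_boot all_order all_algebra.
From mathcomp Require Import all_classical all_reals all_analysis.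
From mathcomp Require Import mxtens.
From mathcomp Require Import ring lra zify.
Import Order.TTheory GRing.Theory Num.Theory.
Set Implicit Arguments. Unset Strict Implicit. Unset Printing Implicit Defensive.
Local Open Scope ring_scope.
From mathcomp Require Import fingroup perm.
Import numFieldNormedType.Exports.
Local Open Scope ring_scope.

Lemma sum_tens (V : nmodType) n (F : 'I_(n * n) -> V) :
  \sum_k F k = \sum_i \sum_j F (mxtens_index (i, j)).
Proof.
rewrite [RHS]pair_big /=.
rewrite (reindex (@mxtens_index n n)) /=; last first.
  by exists (@mxtens_unindex n n) => k _; rewrite (mxtens_indexK, mxtens_unindexK).
by apply: eq_bigr => -[i j].
Qed.

Lemma vecE (R : realType) n (M : 'M[R]_n) i j :
  vec M (mxtens_index (j, i)) 0 = M i j.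
Proof. by rewrite /vec mxE mxtens_indexK. Qed.

Lemma tens_vec (R : realType) n (P Q W : 'M[R]_n) :
  (P *t Q) *m vec W = vec (Q *m W *m P^T).
Proof.
apply/matrixP => k z; rewrite [z]ord1; case: (mxtens_indexP k) => a b.
rewrite vecE !mxE sum_tens; apply: eq_bigr => c _.
under eq_bigr do rewrite tensmxE vecE.
rewrite !mxE mulr_suml; apply: eq_bigr => d _; ring.
Qed.

Lemma vec_dot (R : realType) n (U V : 'M[R]_n) :
  ((vec U)^T *m vec V) 0 0 = \tr (U^T *m V).
Proof.
rewrite mxE sum_tens /mxtrace; apply: eq_bigr => a _.
rewrite mxE; apply: eq_bigr => b _.
by rewrite !mxE mxtens_indexK.
Qed.

Definition bl (R : realType) n (P : 'M[R]_n) (x y : 'cV[R]_n) : R :=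
  (x^T *m P *m y) 0 0.

Lemma blDl (R : realType) n (P : 'M[R]_n) x y z :
  bl P (x + y) z = bl P x z + bl P y z.
Proof. by rewrite /bl linearD /= !mulmxDl mxE. Qed.
Lemma blDr (R : realType) n (P : 'M[R]_n) x y z :
  bl P z (x + y) = bl P z x + bl P z y.
Proof. by rewrite /bl !mulmxDr mxE. Qed.
Lemma blZl (R : realType) n (P : 'M[R]_n) a x y :
  bl P (a *: x) y = a * bl P x y.
Proof. by rewrite /bl linearZ /= -!scalemxAl mxE. Qed.
Lemma blZr (R : realType) n (P : 'M[R]_n) a x y :
  bl P x (a *: y) = a * bl P x y.
Proof. by rewrite /bl -!scalemxAr mxE. Qed.
Lemma blBM (R : realType) n (P Q : 'M[R]_n) x y :
  bl (P - Q) x y = bl P x y - bl Q x y.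
Proof. by rewrite /bl mulmxBr mulmxBl !mxE. Qed.
Lemma blZM (R : realType) n (P : 'M[R]_n) a x y :
  bl (a *: P) x y = a * bl P x y.
Proof. by rewrite /bl -scalemxAr -scalemxAl mxE. Qed.
Lemma bl_sym (R : realType) n (P : 'M[R]_n) x y :
  P^T = P -> bl P x y = bl P y x.
Proof.
move=> sP; rewrite /bl -[in LHS](trmxK (x^T *m P *m y)) [in LHS]mxE.
by rewrite !trmx_mul trmxK sP mulmxA.
Qed.
Lemma bl_delta (R : realType) n (P : 'M[R]_n) i j :
  bl P (delta_mx i 0) (delta_mx j 0) = P i j.
Proof. by rewrite /bl trmx_delta -rowE -colE !mxE. Qed.

Definition psd (R : realType) n (P : 'M[R]_n) :=
  P^T = P /\ forall x, 0 <= bl P x x.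

Lemma posdef_psd (R : realType) n (P : 'M[R]_n) : posdef P -> psd P.
Proof.
move=> [sP pP]; split=> // x; have [->|x0] := eqVneq x 0.
  by rewrite /bl mulmx0 mxE.
exact/ltW/pP.
Qed.

Lemma quad_disc (R : realType) (a b c : R) :
  (forall t, 0 <= a + 2 * t * b + t ^+ 2 * c) -> 0 <= c -> b ^+ 2 <= a * c.
Proof.
move=> H c0; have [ce|cn0] := eqVneq c 0.
  rewrite ce in H *.
  have [->|bn0] := eqVneq b 0; first by rewrite expr0n /= mulr0.
  have := H (- (a + 1) / (2 * b)).
  have -> : a + 2 * (- (a + 1) / (2 * b)) * b + (- (a + 1) / (2 * b)) ^+ 2 * 0
    = -1.
    by field.
  move=> h; lra.
have cp : 0 < c by rewrite lt_def cn0.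
have := H (- b / c).
have -> : a + 2 * (- b / c) * b + (- b / c) ^+ 2 * c = (a * c - b ^+ 2) / c
  by field.
by rewrite pmulr_lge0 ?invr_gt0 // subr_ge0.
Qed.

Lemma bl_CS (R : realType) n (P : 'M[R]_n) x y :
  psd P -> bl P x y ^+ 2 <= bl P x x * bl P y y.
Proof.
move=> [sP pP]; apply: quad_disc; last exact: pP.
move=> t; have := pP (x + t *: y).
rewrite !blDl !blDr !blZl !blZr (bl_sym _ y sP).
by congr (0 <= _); ring.
Qed.

Lemma psd_zero_diag (R : realType) n (P : 'M[R]_n) k j :
  psd P -> P k k = 0 -> P k j = 0.
Proof.
move=> pP Pkk; have := bl_CS (delta_mx k 0) (delta_mx j 0) pP.
rewrite !bl_delta Pkk mul0r => h; apply/eqP; rewrite -sqrf_eq0.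
by rewrite eq_le h sqr_ge0.
Qed.

Lemma bl_cc (R : realType) n (c x : 'cV[R]_n) :
  bl (c *m c^T) x x = (c^T *m x) 0 0 ^+ 2.
Proof.
rewrite /bl !mulmxA -(mulmxA _ c^T) mxE big_ord1 expr2; congr (_ * _).
by rewrite -[in LHS](trmxK (x^T *m c)) mxE trmx_mul trmxK.
Qed.

Lemma mxBZE (R : realType) n (A B : 'M[R]_n) s i j :
  (A - s *: B) i j = A i j - s * B i j.
Proof. by rewrite !mxE. Qed.

Lemma psd_lin (R : realType) n (L : 'M[R]_n -> R) :
  (forall P Q, L (P - Q) = L P - L Q) ->
  (forall a P, L (a *: P) = a * L P) ->
  (forall u : 'cV_n, 0 <= L (u *m u^T)) ->
  forall P, psd P -> 0 <= L P.
Proof.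
move=> LB LZ Lu.
have L0 : L 0 = 0 by rewrite -(subrr 0) LB subrr.
suff H : forall d P, psd P -> (forall i j : 'I_n, (i < n - d)%N -> P i j = 0) ->
  0 <= L P.
  by move=> P pP; apply: (H n) => // i j; rewrite subnn.
elim=> [|d IH] P pP Pz.
  have -> : P = 0 by apply/matrixP => i j; rewrite mxE Pz // subn0.
  by rewrite L0.
have [dn|dn] := leqP n d.
  by apply: IH => // i j h; exfalso; move: h dn; lia.
have kn : (n - d.+1 < n)%N by lia.
set kk := Ordinal kn.
have Pkk0 : 0 <= P kk kk by rewrite -bl_delta; apply: pP.2.
have Pz' : forall i j : 'I_n, (i < n - d)%N -> i != kk -> P i j = 0.
  move=> i j h1 h2; apply: Pz; move: h2; rewrite -val_eqE /= => h2; lia.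
have [Pkk|Pkkn] := eqVneq (P kk kk) 0.
  apply: IH => // i j h; have [->|ik] := eqVneq i kk.
    exact: psd_zero_diag.
  exact: Pz'.
have Pp : 0 < P kk kk by rewrite lt_def Pkkn.
set p := P kk kk; set c := col kk P.
set Q := P - p^-1 *: (c *m c^T).
have [sP qP] := pP.
have cE : forall i, c i 0 = P i kk by move=> i; rewrite mxE.
have ccE : forall i j, (c *m c^T) i j = P i kk * P j kk.
  by move=> i j; rewrite mxE big_ord1 !mxE.
have PS : forall i j, P i j = P j i.
  by move=> i j; rewrite -[in LHS]sP mxE.
have pQ : psd Q.
  split.
    by rewrite /Q linearB /= linearZ /= trmx_mul trmxK sP.
  move=> x; rewrite /Q blBM blZM bl_cc.
  have -> : (c^T *m x) 0 0 = bl P (delta_mx kk 0) x.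
    by rewrite /bl /c colE trmx_mul sP.
  set a := bl P (delta_mx kk 0) x.
  have := qP (x + (- (a / p)) *: delta_mx kk 0).
  rewrite !blDl !blDr !blZl !blZr bl_delta -/p (bl_sym x _ sP) -/a.
  have pn0 : p != 0 by [].
  suff -> : bl P x x + - (a / p) * a + (- (a / p) * a + - (a / p) * (- (a / p) * p)) =
    bl P x x - p^-1 * a ^+ 2 by [].
  by field.
have QP : P = Q + p^-1 *: (c *m c^T) by rewrite /Q subrK.
have -> : L P = L Q + p^-1 * L (c *m c^T).
  by rewrite /Q LB LZ subrK.
apply: addr_ge0; last by apply: mulr_ge0; [rewrite invr_ge0 ltW|exact: Lu].
apply: IH => // i j h; rewrite /Q mxBZE ccE.
have [->|ik] := eqVneq i kk.
  by rewrite -/p (PS j kk) mulrA mulVf // mul1r subrr.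
by rewrite (Pz' i j) // (Pz' i kk) // !(mul0r, mulr0) subrr.
Qed.

Definition unvec (R : realType) n (w : 'cV[R]_(n * n)) : 'M[R]_n :=
  \matrix_(i, j) w (mxtens_index (j, i)) 0.

Lemma unvecK (R : realType) n (w : 'cV[R]_(n * n)) : vec (unvec w) = w.
Proof.
apply/matrixP => k z; rewrite [z]ord1 /vec /unvec !mxE.
by rewrite -surjective_pairing mxtens_unindexK.
Qed.

Lemma vecK (R : realType) n (M : 'M[R]_n) : unvec (vec M) = M.
Proof. by apply/matrixP => i j; rewrite /unvec mxE vecE. Qed.

Lemma tr11 (R : realType) (M : 'M[R]_1) : \tr M = M 0 0.
Proof. by rewrite /mxtrace big_ord1. Qed.

Lemma psd_tens (R : realType) n (P Q : 'M[R]_n) (w : 'cV[R]_(n * n)) :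
  psd P -> psd Q -> 0 <= bl (P *t Q) w w.
Proof.
move=> pP [sQ qQ]; rewrite -(unvecK w); set W := unvec w.
have -> : bl (P *t Q) (vec W) (vec W) = \tr (W^T *m (Q *m W *m P)).
  by rewrite /bl -mulmxA tens_vec vec_dot pP.1.
apply: (@psd_lin _ _ (fun P => \tr (W^T *m (Q *m W *m P)))) => //.
- by move=> P1 P2; rewrite !mulmxBr linearB.
- by move=> a P1; rewrite -!scalemxAr linearZ.
- move=> u; rewrite !mulmxA mxtrace_mulC !mulmxA tr11.
  have := qQ (W *m u); rewrite /bl trmx_mul !mulmxA //.
Qed.

Definition nrm2 (R : realType) n (z : 'cV[R]_n) : R := (z^T *m z) 0 0.

Lemma nrm2E (R : realType) n (z : 'cV[R]_n) : nrm2 z = \sum_i z i 0 ^+ 2.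
Proof. by rewrite /nrm2 mxE; apply: eq_bigr => i _; rewrite mxE expr2. Qed.

Lemma nrm2_ge0 (R : realType) n (z : 'cV[R]_n) : 0 <= nrm2 z.
Proof. by rewrite nrm2E sumr_ge0 // => i _; rewrite sqr_ge0. Qed.

Lemma nrm2_eq0 (R : realType) n (z : 'cV[R]_n) : nrm2 z = 0 -> z = 0.
Proof.
rewrite nrm2E => h; apply/matrixP => i j; rewrite [j]ord1 mxE.
have := @psumr_eq0P _ _ xpredT (fun i => z i 0 ^+ 2) (fun i _ => sqr_ge0 (z i 0)) h i isT.
by move/eqP; rewrite sqrf_eq0 => /eqP.
Qed.

Lemma nrm2_gt0 (R : realType) n (z : 'cV[R]_n) : z != 0 -> 0 < nrm2 z.
Proof.
move=> zn; rewrite lt_def nrm2_ge0 andbT; apply/eqP => /nrm2_eq0 h.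
by rewrite h eqxx in zn.
Qed.

Lemma posdef_unit (R : realType) n (P : 'M[R]_n) : posdef P -> P \in unitmx.
Proof.
move=> [sP pP]; rewrite unitmxE unitfE; apply/negP => /det0P [v vn vP].
have := pP v^T; rewrite trmx_eq0 trmxK vP mul0mx mxE ltxx => /(_ vn).
by [].
Qed.

Lemma psd_unit_posdef (R : realType) n (P : 'M[R]_n) :
  psd P -> P \in unitmx -> posdef P.
Proof.
move=> pP Pu; split; first exact: pP.1.
move=> x xn; rewrite lt_def; have -> /= : 0 <= (x^T *m P *m x) 0 0 by exact: pP.2.
rewrite andbT; apply/eqP => h.
have h2 : forall y, bl P y x = 0.
  move=> y; have := bl_CS y x pP; rewrite [bl P x x]h mulr0 => h3.
  by apply/eqP; rewrite -sqrf_eq0 eq_le h3 sqr_ge0.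
have := h2 (P *m x); rewrite /bl -mulmxA => /(@nrm2_eq0 R n) Px0.
by move: xn; rewrite -(mulKmx Pu x) Px0 mulmx0 eqxx.
Qed.

Lemma psd_mid (R : realType) m N (A : 'M[R]_(m, N)) (G : 'M[R]_N) :
  psd G -> psd (A *m G *m A^T).
Proof.
move=> [sG qG]; split; first by rewrite !trmx_mul trmxK sG mulmxA.
move=> v; have := qG (A^T *m v); rewrite /bl trmx_mul trmxK !mulmxA //.
Qed.

Lemma psd_inv_form (R : realType) m (M : 'M[R]_m) (b : 'cV[R]_m) :
  psd M -> 0 <= (b^T *m invmx M *m b) 0 0.
Proof.
move=> [sM qM]; have [Mu|Mnu] := boolP (M \in unitmx).
  rewrite -{1}(mulKVmx Mu b) trmx_mul sM -!mulmxA (mulmxA M) (mulmxV Mu) mul1mx.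
  by have := qM (invmx M *m b); rewrite /bl -mulmxA mulKVmx.
by rewrite invmx_out ?inE //; exact: qM.
Qed.



Lemma mxBE (R : realType) m n (A B : 'M[R]_(m, n)) i j :
  (A - B) i j = A i j - B i j.
Proof. by rewrite !mxE. Qed.

Lemma blDM (R : realType) n (P Q : 'M[R]_n) x y :
  bl (P + Q) x y = bl P x y + bl Q x y.
Proof. by rewrite /bl mulmxDr mulmxDl !mxE. Qed.

Lemma Gmat_sym (R : realType) n (C X : 'M[R]_n) :
  C^T = C -> X^T = X -> (Gmat C X)^T = Gmat C X.
Proof.
move=> sC sX; rewrite /Gmat linearZ /= linearD /= !trmx_tens trmx_inv sC sX.
by [].
Qed.

Lemma Gmat_psd (R : realType) n (C X : 'M[R]_n) :
  psd (invmx C) -> psd X -> psd (Gmat C X).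
Proof.
move=> pC pX; split.
  by rewrite /Gmat linearZ /= linearD /= !trmx_tens pC.1 pX.1.
move=> w; rewrite /Gmat blZM blDM; apply: mulr_ge0; first by rewrite invr_ge0.
by apply: addr_ge0; apply: psd_tens.
Qed.

Lemma posdef_inv_psd (R : realType) n (C : 'M[R]_n) :
  posdef C -> psd (invmx C).
Proof.
move=> pC; have Cu := posdef_unit pC; have [sC qC] := posdef_psd pC.
have sC' : (invmx C)^T = invmx C by rewrite trmx_inv sC.
split=> // x; have := qC (invmx C *m x).
by rewrite /bl trmx_mul sC' -!mulmxA (mulmxA C) mulmxV // mul1mx.
Qed.

Lemma key_trace (R : realType) m n (C : 'M[R]_n) (A : 'I_m -> 'M[R]_n)
  (b : 'cV[R]_m) (Xt D : 'M[R]_n) :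
  C^T = C -> C \in unitmx -> Xt^T = Xt -> Xt \in unitmx ->
  lin_feasible A b (invmx C) ->
  vec D = Gmat C Xt *m (Amat A)^T
         *m invmx (Amat A *m Gmat C Xt *m (Amat A)^T) *m b - vec Xt ->
  \tr (D *m invmx Xt) =
  (b^T *m invmx (Amat A *m Gmat C Xt *m (Amat A)^T) *m b) 0 0 - n%:R.
Proof.
move=> sC Cu sX Xu hF hD.
set K := invmx _; set Y := invmx Xt; set C' := invmx C.
have sY : Y^T = Y by rewrite trmx_inv sX.
have sC' : C'^T = C' by rewrite trmx_inv sC.
have GY : Gmat C Xt *m vec Y = vec C'.
  rewrite /Gmat -scalemxAl mulmxDl !tens_vec sC' sX mulmxV // mul1mx.
  rewrite -mulmxA mulVmx // mulmx1.
  by apply/matrixP => i j; rewrite !mxE; field.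
rewrite mxtrace_mulC -[in Y *m D]sY -vec_dot hD mulmxBr mxBE.
rewrite vec_dot sY mulVmx // mxtrace1; congr (_ - _).
have e1 : (vec Y)^T *m Gmat C Xt = (vec C')^T.
  by rewrite -GY trmx_mul Gmat_sym.
have e2 : (vec C')^T *m (Amat A)^T = b^T by rewrite -trmx_mul hF.
by rewrite !mulmxA e1 e2.
Qed.

Lemma Amat_tr_vec (R : realType) m n (A : 'I_m -> 'M[R]_n) (y : 'cV[R]_m) :
  (Amat A)^T *m y = vec (\sum_l y l 0 *: A l).
Proof.
apply/matrixP => k z; rewrite [z]ord1 !mxE summxE; apply: eq_bigr => l _.
by rewrite !mxE mulrC.
Qed.

Lemma mxZDE (R : realType) m n (U V : 'M[R]_(m, n)) a i j :
  (a *: (U + V)) i j = a * (U i j + V i j).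
Proof. by rewrite !mxE. Qed.

Lemma Z_sym (R : realType) m n (C : 'M[R]_n) (A : 'I_m -> 'M[R]_n)
  (Xm : 'M[R]_n) (y : 'cV[R]_m) i j :
  C^T = C -> (forall l, (A l)^T = A l) ->
  (Gmat C Xm *m (Amat A)^T *m y) (mxtens_index (j, i)) 0 =
  (Gmat C Xm *m (Amat A)^T *m y) (mxtens_index (i, j)) 0.
Proof.
move=> sC sA; rewrite -mulmxA Amat_tr_vec.
set W := \sum_l _.
have sW : W^T = W.
  by rewrite /W linear_sum /=; apply: eq_bigr => l _; rewrite linearZ /= sA.
have sC' : (invmx C)^T = invmx C by rewrite trmx_inv sC.
rewrite /Gmat -scalemxAl mulmxDl !tens_vec !mxZDE !vecE sC'.
congr (_ * _); rewrite addrC; congr (_ + _).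
  by rewrite -[in LHS](trmxK (_ *m _ *m _)) mxE !trmx_mul sC' sW mulmxA trmxK.
by rewrite -[in RHS](trmxK (_ *m _ *m _)) [in RHS]mxE !trmx_mul trmxK sW sC' mulmxA.
Qed.

Lemma blE (R : realType) n (Q : 'M[R]_n) x y :
  bl Q x y = \sum_i \sum_j x i 0 * Q i j * y j 0.
Proof.
rewrite /bl mxE exchange_big; apply: eq_bigr => j _.
by rewrite mxE mulr_suml; apply: eq_bigr => i _; rewrite !mxE.
Qed.

Lemma entry_sq_le (R : realType) n (z : 'cV[R]_n) i : z i 0 ^+ 2 <= nrm2 z.
Proof.
rewrite nrm2E (bigD1 i) //= lerDl; apply: sumr_ge0 => k _; exact: sqr_ge0.
Qed.

Lemma qf_bound (R : realType) n (Q : 'M[R]_n) x :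
  `|bl Q x x| <= (\sum_i \sum_j `|Q i j|) * nrm2 x.
Proof.
rewrite blE mulr_suml; apply: le_trans (ler_norm_sum _ _ _) _.
apply: ler_sum => i _; rewrite mulr_suml.
apply: le_trans (ler_norm_sum _ _ _) _; apply: ler_sum => j _.
have h1 := entry_sq_le x i; have h2 := entry_sq_le x j.
rewrite !normrM.
have : `|x i 0| * `|x j 0| <= nrm2 x.
  have a0 := normr_ge0 (x i 0); have b0 := normr_ge0 (x j 0).
  rewrite -(real_normK (num_real (x i 0))) in h1.
  rewrite -(real_normK (num_real (x j 0))) in h2.
  set u := `|x i 0| in a0 h1 *; set v := `|x j 0| in b0 h2 *.
  have : 2 * (u * v) <= u ^+ 2 + v ^+ 2.
    rewrite -subr_ge0; have -> : u ^+ 2 + v ^+ 2 - 2 * (u * v) = (u - v) ^+ 2 by ring.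
    exact: sqr_ge0.
  move=> hh; clear -hh h1 h2; lra.
move=> huv.
rewrite [X in X <= _](_ : _ = `|Q i j| * (`|x i 0| * `|x j 0|)); last by ring.
by apply: ler_wpM2l.
Qed.

Lemma pd_lower (R : realType) n (P : 'M[R]_n) :
  posdef P -> exists2 K, 0 < K & forall x, nrm2 x <= K * bl P x x.
Proof.
move=> pP; have Pu := posdef_unit pP; have [sP qP] := posdef_psd pP.
set Y := invmx P.
have sY : Y^T = Y by rewrite trmx_inv sP.
set S := \sum_i \sum_j `|Y i j|.
have S0 : 0 <= S by apply: sumr_ge0 => i _; apply: sumr_ge0 => j _.
exists (S + 1); first by rewrite ltr_wpDl.
move=> x; have q0 := qP x.
have [N0|Nn0] := eqVneq (nrm2 x) 0.
  by rewrite N0 mulr_ge0 // addr_ge0.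
have Np : 0 < nrm2 x by rewrite lt_def Nn0 nrm2_ge0.
have e1 : bl P x (Y *m x) = nrm2 x.
  by rewrite /bl /nrm2 !mulmxA -(mulmxA _ P) mulmxV // mulmx1.
have e2 : bl P (Y *m x) (Y *m x) = bl Y x x.
  by rewrite /bl trmx_mul sY -!mulmxA (mulmxA P) mulmxV // mul1mx mulmxA.
have := bl_CS x (Y *m x) (posdef_psd pP); rewrite e1 e2 => h.
have := qf_bound Y x; rewrite -/S => hb.
have hb' : bl Y x x <= S * nrm2 x by apply: le_trans (ler_norm _) hb.
set N := nrm2 x in Np h hb' *; set q := bl P x x in q0 h *.
set r := bl Y x x in h hb'.
have : N ^+ 2 <= q * (S * N) by apply: le_trans h _; apply: ler_wpM2l.
rewrite expr2 mulrA => h3.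
have h4 : N <= q * S by rewrite -(ler_pM2r Np).
rewrite mulrDl mul1r mulrC; apply: le_trans h4 _; rewrite lerDl. exact: q0.
Qed.

Lemma pd_open (R : realType) n (P : 'M[R]_n) :
  posdef P -> exists2 e, 0 < e & forall Y, Y^T = Y ->
    (forall i j, `|Y i j - P i j| < e) -> posdef Y.
Proof.
move=> pP; have [K K0 hK] := pd_lower pP.
set c : R := (n * n)%:R.
have c0 : 0 <= c by [].
exists (K * (c + 1))^-1; first by rewrite invr_gt0 mulr_gt0 // ltr_wpDl.
move=> Y sY hY; split=> // x xn.
have Np := nrm2_gt0 xn; have := hK x.
have hb := qf_bound (Y - P) x.
have hS : \sum_i \sum_j `|(Y - P) i j| <= c * (K * (c + 1))^-1.
  apply: (@le_trans _ _ (\sum_(i < n) \sum_(j < n) (K * (c + 1))^-1)).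
    apply: ler_sum => i _; apply: ler_sum => j _; rewrite mxBE; exact: ltW.
  by rewrite sumr_const sumr_const card_ord -mulrnA /c mulr_natl.
rewrite blBM in hb.
set e := (K * (c + 1))^-1 in hS.
have ee : e * (K * (c + 1)) = 1 by rewrite mulVf // mulf_neq0 ?gt_eqF ?ltr_wpDl.
set N := nrm2 x in Np hb *; set q := bl P x x; set s := \sum_i _ in hb hS.
move=> hq; rewrite -/(bl Y x x).
set a := bl Y x x in hb *.
have h1 : q - a <= s * N by apply: le_trans (ler_norm _) _; rewrite distrC.
have h2 : s * N <= c * e * N by rewrite ler_wpM2r // ltW.
have h3 : c * e * K < 1.
  have e3 : c * e * K * (c + 1) = c * (e * (K * (c + 1))) by ring.
  rewrite ee mulr1 in e3.
  by rewrite -(ltr_pM2r (ltr_wpDl c0 ltr01)) e3 mul1r ltrDl.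
have h4 : c * e * N * K < K * q.
  apply: lt_le_trans hq; rewrite -mulrA (mulrC N) mulrA.
  by rewrite gtr_pMl.
have h5 : c * e * N < q by rewrite -(ltr_pM2r K0) [q * K]mulrC.
move: h1 h2 h5; clear; lra.
Qed.

Lemma is_derive_sum_seq (R : realType) (I : Type) (r : seq I)
  (f : I -> R -> R) (df : I -> R) (x : R) :
  (forall i, is_derive x 1 (f i) (df i)) ->
  is_derive x 1 (fun s => \sum_(i <- r) f i s) (\sum_(i <- r) df i).
Proof.
move=> hf; elim: r => [|a r IH].
  rewrite big_nil.
  have -> : (fun s => \sum_(i <- [::]) f i s) = cst 0.
    by apply: funext => s; rewrite big_nil.
  exact: is_derive_cst.
rewrite big_cons.
have -> : (fun s => \sum_(i <- a :: r) f i s) =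
  (f a + (fun s => \sum_(i <- r) f i s))%R.
  by apply: funext => s; rewrite big_cons.
exact: is_deriveD.
Qed.

Lemma is_derive_prod_seq (R : realType) (I : eqType) (r : seq I)
  (f : I -> R -> R) (df : I -> R) (x : R) :
  uniq r -> (forall i, is_derive x 1 (f i) (df i)) ->
  is_derive x 1 (fun s => \prod_(i <- r) f i s)
    (\sum_(i <- r) \prod_(j <- r) (if j == i then df j else f j x)).
Proof.
move=> + hf; elim: r => [|a r IH].
  move=> _; rewrite big_nil.
  have -> : (fun s => \prod_(i <- [::]) f i s) = cst 1.
    by apply: funext => s; rewrite big_nil.
  exact: is_derive_cst.
rewrite cons_uniq => /andP [ar ur].
have -> : (fun s => \prod_(i <- a :: r) f i s) =
  (f a * (fun s => \prod_(i <- r) f i s))%R.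
  by apply: funext => s; rewrite big_cons.
have H := is_deriveM (hf a) (IH ur).
apply: is_derive_eq.
rewrite big_cons big_cons eqxx.
have -> : \prod_(j <- r) (if j == a then df j else f j x) = \prod_(j <- r) f j x.
  by apply: eq_big_seq => j jr; case: eqP => // ja; rewrite -ja jr in ar.
have -> : \sum_(i <- r) \prod_(j <- a :: r) (if j == i then df j else f j x)
  = f a x * \sum_(i <- r) \prod_(j <- r) (if j == i then df j else f j x).
  rewrite mulr_sumr; apply: eq_big_seq => i ir; rewrite big_cons.
  by case: eqP => // ai; rewrite ai ir in ar.
by rewrite /= addrC mulrC.
Qed.

Lemma is_derive_val (R : realType) (f : R -> R) (x d d' : R) :
  is_derive x 1 f d -> d = d' -> is_derive x 1 f d'.
Proof. by move=> h <-. Qed.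

Lemma cofactor_row (R : realType) n (A B : 'M[R]_n) i j :
  (forall a b, a != i -> A a b = B a b) -> cofactor A i j = cofactor B i j.
Proof.
move=> h; rewrite /cofactor; congr (_ * \det _).
by apply/matrixP => a b; rewrite !mxE h // eq_sym neq_lift.
Qed.

Lemma is_derive_det (R : realType) n (F : R -> 'M[R]_n) (D : 'M[R]_n) (x : R) :
  (forall i j, is_derive x 1 (fun s => F s i j) (D i j)) ->
  is_derive x 1 (fun s => \det (F s))
    (\sum_i \sum_j D i j * cofactor (F x) i j).
Proof.
move=> hF.
have hp : forall s : 'S_n, is_derive x 1
    (fun t => (-1) ^+ s * \prod_i F t i (s i))
    ((-1) ^+ s * \sum_(i <- index_enum 'I_n) \prod_(j <- index_enum 'I_n)
        (if j == i then D j (s j) else F x j (s j))).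
  move=> s.
  have -> : (fun t => (-1) ^+ s * \prod_i F t i (s i)) =
    ((-1) ^+ s : R) *: (fun t => \prod_(i <- index_enum 'I_n) F t i (s i)).
    by apply: funext => t.
  apply: is_deriveZ.
  exact: (is_derive_prod_seq (f := fun i t => F t i (s i)) (index_enum_uniq _)).
have := is_derive_sum_seq (index_enum {perm 'I_n}) hp.
have -> : (fun s0 => \sum_(i <- index_enum {perm 'I_n})
    (-1) ^+ i * \prod_i0 F s0 i0 (i i0)) = (fun s => \det (F s)) by [].
move=> H; apply: (is_derive_val H).
under eq_bigr do rewrite mulr_sumr.
rewrite exchange_big; apply: eq_bigr => i _.
set M := \matrix_(j, l) (if j == i then D j l else F x j l).
have -> : \sum_(s : {perm 'I_n}) (-1) ^+ s * \prod_j
    (if j == i then D j (s j) else F x j (s j)) = \det M.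
  by rewrite /determinant; apply: eq_bigr => s _; congr (_ * _);
    apply: eq_bigr => j _; rewrite mxE.
rewrite (expand_det_row _ i); apply: eq_bigr => l _.
rewrite mxE eqxx; congr (_ * _); apply: cofactor_row => a b ai.
by rewrite mxE (negbTE ai).
Qed.

Lemma entry_derive (R : realType) n (X : R -> 'M[R]_n) (t : R) :
  derivable X t 1 -> forall i j,
  is_derive t 1 (fun s => X s i j) (('D_1 X t) i j).
Proof.
move=> dX i j; rewrite derive_mx // mxE; apply: derivableP.
exact: ((derivable_mxP _ _ _).1 dX i j).
Qed.

Lemma is_derive_cont (R : realType) (f : R -> R) (t d : R) :
  is_derive t 1 f d -> {for t, continuous f}.
Proof.
move=> h; apply: differentiable_continuous; apply/derivable1_diffP.
by case: h.
Qed.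

Lemma tr_adj (R : realType) n (Xt D : 'M[R]_n) :
  Xt \in unitmx ->
  \tr (D *m invmx Xt) = (\det Xt)^-1 * \sum_i \sum_j D i j * cofactor Xt i j.
Proof.
move=> Xu; rewrite /invmx Xu -scalemxAr mxtraceZ; congr (_ * _).
rewrite /mxtrace; apply: eq_bigr => i _; rewrite mxE; apply: eq_bigr => j _.
by rewrite mxE.
Qed.

Lemma affine_derive (R : realType) (c d : R) (x : R) :
  is_derive x 1 (fun l => c + l * d) d.
Proof.
have -> : (fun l => c + l * d) = (cst c + d *: (@id R))%R.
  by apply: funext => l; rewrite /= mulrC.
have h : is_derive x 1 (cst c + d *: (@id R))%R (0 + d *: 1).
  exact: is_deriveD.
by apply: (is_derive_val h); rewrite add0r /= ?mulr1 ?scaler1.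
Qed.

Lemma posdef_det_gt0 (R : realType) n (P : 'M[R]_n) : posdef P -> 0 < \det P.
Proof.
move=> pP; set F := fun l : R => 1%:M + l *: (P - 1%:M).
have dF : forall (x : R) i j, is_derive x 1 (fun s => F s i j) ((P - 1%:M) i j).
  move=> x i j; have := affine_derive ((1%:M : 'M[R]_n) i j) ((P - 1%:M) i j) x.
  have -> : (fun l => (1%:M : 'M[R]_n) i j + l * (P - 1%:M) i j) =
    (fun s => F s i j) by apply: funext => s; rewrite /F !mxE.
  by [].
have cF : forall x : R, {for x, continuous (fun s => \det (F s))}.
  by move=> x; apply: is_derive_cont; apply: is_derive_det; exact: dF x.
have pdF : forall l, 0 <= l <= 1 -> posdef (F l).
  move=> l /andP [l0 l1]; have [sP qP] := pP; split.
    by rewrite /F linearD linearZ /= linearB /= sP trmx1.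
  move=> x xn; have N := nrm2_gt0 xn; have q := qP x xn.
  rewrite -/(bl (F l) x x) /F blDM blZM blBM.
  have e1 : bl 1%:M x x = nrm2 x by rewrite /bl mulmx1.
  rewrite e1; set N' := nrm2 x in N *; set q' := bl P x x in q *.
  have [l1'|l1'] := ltrP l 1.
    have : 0 < (1 - l) * N' by rewrite mulr_gt0 // subr_gt0.
    have : 0 <= l * q' by rewrite mulr_ge0 // ltW.
    move=> h1 h2; rewrite [X in 0 < X](_ : _ = (1 - l) * N' + l * q'); last by ring.
    by apply: ltr_wpDr.
  have -> : l = 1 by apply/eqP; rewrite eq_le l1 l1'.
  by rewrite mul1r addrC subrK.
have F1 : F 1 = P by rewrite /F scale1r addrC subrK.
have F0 : F 0 = 1%:M by rewrite /F scale0r addr0.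
have dn0 : forall l, 0 <= l <= 1 -> \det (F l) != 0.
  move=> l hl; have := posdef_unit (pdF l hl).
  by rewrite unitmxE unitfE.
rewrite -F1; have := dn0 1; rewrite ler01 lexx => /(_ isT) h1.
rewrite lt_def h1 /=; rewrite leNgt; apply/negP => hneg.
have := @IVT R (fun s => \det (F s)) 0 1 0 ler01.
case.
- by apply: continuous_subspaceT => x; apply: cF.
- rewrite /= F0 det1; apply/andP; split.
    by rewrite ge_min; apply/orP; right; exact: ltW.
  by rewrite le_max ler01.
move=> c; rewrite in_itv /= => hc hdc.
by have := dn0 c hc; rewrite hdc eqxx.
Qed.

Lemma part1 (R : realType) (m n : nat) (C : 'M[R]_n)
  (A : 'I_m -> 'M[R]_n) (b : 'cV[R]_m) (X : R -> 'M[R]_n) (t : R) :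
  C^T = C -> posdef C -> lin_feasible A b (invmx C) ->
  derivable X t 1 ->
  vec ('D_1 X t) =
       Gmat C (X t) *m (Amat A)^T
         *m invmx (Amat A *m Gmat C (X t) *m (Amat A)^T) *m b - vec (X t) ->
  posdef (X t) ->
  is_derive t 1 (fun s => ln (\det (X s)))
       ((b^T *m invmx (Amat A *m Gmat C (X t) *m (Amat A)^T) *m b) 0 0 - n%:R)
  /\ - (n%:R) <=
       (b^T *m invmx (Amat A *m Gmat C (X t) *m (Amat A)^T) *m b) 0 0 - n%:R.
Proof.
move=> sC pC hF dX hD pX; split; last first.
  rewrite lerBrDr addNr; apply: psd_inv_form; apply: psd_mid.
  exact: Gmat_psd (posdef_inv_psd pC) (posdef_psd pX).
have Xu := posdef_unit pX; have Cu := posdef_unit pC.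
have hdet := is_derive_det (entry_derive dX).
have dpos := posdef_det_gt0 pX.
have hln := is_derive1_comp (is_derive1_ln dpos) hdet.
apply: (is_derive_val hln).
rewrite -tr_adj //; exact: key_trace (pX.1) Xu hF hD.
Qed.

Lemma cont_seg (R : realType) (f : R -> R) (a b : R) :
  (forall x, a <= x -> x <= b -> {for x, continuous f}) ->
  {within `[a, b], continuous f}%classic.
Proof.
move=> h; apply: continuous_in_subspaceT => x.
move=> /set_mem /=; rewrite in_itv /= => /andP [h1 h2]; exact: h.
Qed.

Lemma mvt0 (R : realType) (f df : R -> R) (a b : R) :
  a <= b -> (forall x, a <= x -> x <= b -> is_derive x 1 f (df x)) ->
  exists2 c, a <= c <= b & f b - f a = df c * (b - a).
Proof.
move=> ab h.
have h1 : forall x, x \in `]a, b[ -> is_derive x 1 f (df x).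
  by move=> x; rewrite in_itv /= => /andP [g1 g2]; apply: h; apply: ltW.
have h2 : {within `[a, b], continuous f}%classic.
  by apply: cont_seg => x g1 g2; apply: (is_derive_cont (h x g1 g2)).
have [c hc e] := @MVT_segment R f df a b ab h1 h2.
by exists c => //; rewrite in_itv /= in hc.
Qed.

Lemma sym_all (R : realType) (m n : nat) (C : 'M[R]_n)
  (A : 'I_m -> 'M[R]_n) (b : 'cV[R]_m) (X : R -> 'M[R]_n) :
  C^T = C -> (forall l, (A l)^T = A l) ->
  (forall t : R, 0 <= t -> derivable X t 1) ->
  (forall t : R, 0 <= t ->
     vec ('D_1 X t) =
       Gmat C (X t) *m (Amat A)^T
         *m invmx (Amat A *m Gmat C (X t) *m (Amat A)^T) *m b - vec (X t)) ->
  (X 0)^T = X 0 ->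
  forall T : R, 0 <= T -> (X T)^T = X T.
Proof.
move=> sC sA hd hD s0 T T0; apply/matrixP => i j; rewrite mxE.
set f := fun s => expR s * (X s j i - X s i j).
have df : forall x : R, 0 <= x -> is_derive x 1 f 0.
  move=> x x0.
  have e1 := entry_derive (hd x x0) j i; have e2 := entry_derive (hd x x0) i j.
  have hdiff := is_deriveB e1 e2.
  have hm := is_deriveM (is_derive_expR x) hdiff.
  apply: (is_derive_val hm).
  have vji : ('D_1 X x) j i = vec ('D_1 X x) (mxtens_index (i, j)) 0 by rewrite vecE.
  have vij : ('D_1 X x) i j = vec ('D_1 X x) (mxtens_index (j, i)) 0 by rewrite vecE.
  rewrite vji vij !hD // !mxBE !vecE -!(mulmxA (Gmat C (X x) *m (Amat A)^T)).
  rewrite (Z_sym _ _ _ _ sC sA) /=.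
  set z := (_ *m _ *m _) _ _.
  change (expR x * (z - X x j i - (z - X x i j)) + (X x j i - X x i j) * expR x = 0).
  ring.
have [c hc e] := mvt0 (f := f) (df := fun _ => 0) T0 (fun x h _ => df x h).
move: e; rewrite mul0r => /eqP; rewrite subr_eq0 /f expR0 mul1r => /eqP.
have -> : X 0 j i - X 0 i j = 0.
  by rewrite -{1}s0 mxE subrr.
move/eqP; rewrite mulf_eq0 gt_eqF ?expR_gt0 //= subr_eq0 => /eqP.
by [].
Qed.

Lemma near_ballR (R : realType) (P : R -> Prop) (x : R) :
  (\forall y \near x, P y) -> exists2 d, 0 < d & forall y, `|x - y| < d -> P y.
Proof.
by move=> /nbhs_ballP [d d0 h]; exists d => // y hy; apply: h.
Qed.

Lemma cont_near (R : realType) (f : R -> R) (x e : R) :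
  {for x, continuous f} -> 0 < e ->
  exists2 d, 0 < d & forall y, `|x - y| < d -> `|f x - f y| < e.
Proof.
move=> cf e0; apply: near_ballR.
by move/(@cvgrPdist_lt _ _ _ _ (nbhs_filter x)): cf => /(_ e e0).
Qed.

Lemma closure_ge (R : realType) (f : R -> R) (tau c : R) :
  {for tau, continuous f} -> 0 < tau ->
  (forall r, 0 <= r -> r < tau -> c <= f r) -> c <= f tau.
Proof.
move=> cf tau0 h; rewrite leNgt; apply/negP => hlt.
have e0 : 0 < c - f tau by rewrite subr_gt0.
have [d d0 hd] := cont_near cf e0.
set r := Num.max 0 (tau - d / 2).
have r0 : 0 <= r by rewrite le_max lexx.
have rt : r < tau.
  by rewrite gt_max tau0 /= ltrBlDr ltrDl divr_gt0.
have hr : `|tau - r| < d.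
  rewrite ger0_norm ?subr_ge0 ?ltW //.
  have : tau - d / 2 <= r by rewrite le_max lexx orbT.
  move=> h1; apply: (@le_lt_trans _ _ (d / 2)); first by rewrite lerBlDl -lerBlDr.
  by rewrite ltr_pdivrMr // ltr_pMr // ltr1n.
have := hd r hr; have := h r r0 rt.
move=> h1 h2; have h3 := ler_norm (f r - f tau).
rewrite distrC in h2; lra.
Qed.

Lemma bl_derive (R : realType) n (X : R -> 'M[R]_n) (x : 'cV[R]_n) (t : R) :
  derivable X t 1 ->
  is_derive t 1 (fun s => bl (X s) x x) (bl ('D_1 X t) x x).
Proof.
move=> dX.
have -> : (fun s => bl (X s) x x) =
    fun s => \sum_(i <- index_enum 'I_n) \sum_(j <- index_enum 'I_n)
      x i 0 * X s i j * x j 0.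
  by apply: funext => s; rewrite blE.
rewrite blE; apply: is_derive_sum_seq => i.
apply: (@is_derive_sum_seq R _ (index_enum 'I_n) (fun j s => x i 0 * X s i j * x j 0)) => j.
have -> : (fun s => x i 0 * X s i j * x j 0) =
    (x i 0 * x j 0) *: (fun s => X s i j).
  apply: funext => s; change (x i 0 * X s i j * x j 0 = (x i 0 * x j 0) * X s i j); ring.
apply: (is_derive_val (is_deriveZ _ (entry_derive dX i j))).
by rewrite /GRing.scale /=; ring.
Qed.

Lemma lndet_lb (R : realType) (m n : nat) (C : 'M[R]_n)
  (A : 'I_m -> 'M[R]_n) (b : 'cV[R]_m) (X : R -> 'M[R]_n) (s : R) :
  C^T = C -> posdef C -> lin_feasible A b (invmx C) ->
  (forall t : R, 0 <= t -> derivable X t 1) ->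
  (forall t : R, 0 <= t ->
     vec ('D_1 X t) =
       Gmat C (X t) *m (Amat A)^T
         *m invmx (Amat A *m Gmat C (X t) *m (Amat A)^T) *m b - vec (X t)) ->
  0 <= s -> (forall r, 0 <= r -> r <= s -> posdef (X r)) ->
  ln (\det (X 0)) - n%:R * s <= ln (\det (X s)).
Proof.
move=> sC pC hF hd hD s0 hP.
set g := ((fun r => ln (\det (X r))) + (fun l => 0 + l * n%:R))%R.
set v := fun r => (b^T *m invmx (Amat A *m Gmat C (X r) *m (Amat A)^T) *m b) 0 0.
have dg : forall r, 0 <= r -> r <= s -> is_derive r 1 g (v r - n%:R + n%:R).
  move=> r r0 rs.
  have [h1 _] := part1 sC pC hF (hd r r0) (hD r r0) (hP r r0 rs).
  exact: is_deriveD h1 (affine_derive _ _ _).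
have [c /andP [c0 cs] e] := mvt0 s0 dg.
have [_ h2] := part1 sC pC hF (hd c c0) (hD c c0) (hP c c0 cs).
have : 0 <= g s - g 0.
  by rewrite e; apply: mulr_ge0; [rewrite -lerBlDr sub0r | rewrite subr0].
change (0 <= (ln (\det (X s)) + (0 + s * n%:R)) - (ln (\det (X 0)) + (0 + 0 * n%:R)) -> ln (\det (X 0)) - n%:R * s <= ln (\det (X s))).
rewrite mul0r !add0r addr0 mulrC; lra.
Qed.


Unset Implicit Arguments.
Theorem theorem4p8 (R : realType) (m n : nat) (C : 'M[R]_n)
  (A : 'I_m -> 'M[R]_n) (b : 'cV[R]_m) (X : R -> 'M[R]_n) :
  C^T = C -> (forall l, (A l)^T = A l) ->
  posdef C -> lin_indep A -> lin_feasible A b (invmx C) ->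
  (forall t : R, 0 <= t -> derivable X t 1) ->
  (forall t : R, 0 <= t ->
     vec ('D_1 X t) =
       Gmat C (X t) *m (Amat A)^T
         *m invmx (Amat A *m Gmat C (X t) *m (Amat A)^T) *m b - vec (X t)) ->
  posdef (X 0) ->
  (forall t : R, 0 <= t -> posdef (X t) ->
     is_derive t 1 (fun s => ln (\det (X s)))
       ((b^T *m invmx (Amat A *m Gmat C (X t) *m (Amat A)^T) *m b) 0 0 - n%:R)
     /\ - (n%:R) <=
       (b^T *m invmx (Amat A *m Gmat C (X t) *m (Amat A)^T) *m b) 0 0 - n%:R)
  /\ (forall T : R, 0 <= T -> posdef (X T)).
Proof.
move=> sC sA pC liA hF hd hD pX0.
split.
  by move=> t t0 pXt; exact: part1 sC pC hF (hd t t0) (hD t t0) pXt.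
move=> T T0.
have symX := sym_all sC sA hd hD pX0.1.
set S := [set t : R | (0 <= t /\ t <= T) /\
  forall r, 0 <= r -> r <= t -> posdef (X r)]%classic.
have S0 : S 0.
  split; first by split.
  by move=> r r0 r0'; have -> : r = 0 by apply/eqP; rewrite eq_le r0' r0.
have ubS : ubound S T by move=> t [[_ tT] _].
have hS : has_sup S by split; [exists 0 | exists T].
set tau := sup S.
have tau0 : 0 <= tau := sup_upper_bound hS S0.
have tauT : tau <= T by apply: ge_sup => //; exists 0.
have hA : forall r, 0 <= r -> r < tau -> posdef (X r).
  move=> r r0 rt.
  have ep : 0 < tau - r by rewrite subr_gt0.
  have [e [[e0 eT] he] hre] := sup_adherent ep hS.
  have re : r < e by move: hre; rewrite -/tau opprB addrCA subrr addr0.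
  exact: he r r0 (ltW re).
set delta := expR (ln (\det (X 0)) - n%:R * T).
have d0 : 0 < delta := expR_gt0 _.
have hdet : forall r, 0 <= r -> r < tau -> delta <= \det (X r).
  move=> r r0 rt.
  have hl := lndet_lb sC pC hF hd hD r0
    (fun r' r0' r'r => hA r' r0' (le_lt_trans r'r rt)).
  have dp := posdef_det_gt0 (hA r r0 rt).
  rewrite -[\det (X r)]lnK ?posrE // ler_expR; apply: le_trans hl.
  rewrite lerD2l lerN2; apply: ler_wpM2l => //.
  exact: ltW (lt_le_trans rt tauT).
have htau : posdef (X tau).
  have [te|tn] := eqVneq tau 0; first by rewrite te.
  have tp : 0 < tau by rewrite lt_def tn.
  have dX := hd tau tau0.
  apply: psd_unit_posdef.
    split; first exact: symX.
    move=> x; apply: (closure_ge (f := fun s => bl (X s) x x)) => //.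
      exact: is_derive_cont (bl_derive x dX).
    by move=> r r0 rt; exact: (posdef_psd (hA r r0 rt)).2.
  have : delta <= \det (X tau).
    apply: (closure_ge (f := fun s => \det (X s))) => //.
    exact: is_derive_cont (is_derive_det (entry_derive dX)).
  by move=> h; rewrite unitmxE unitfE gt_eqF // (lt_le_trans d0 h).
have Stau : S tau.
  split; first by split.
  move=> r r0 rt; have [rlt|rge] := ltP r tau; first exact: hA.
  by have -> : r = tau by apply/eqP; rewrite eq_le rt rge.
have [tT|tT] := eqVneq tau T; first by rewrite -tT.
have tlt : tau < T by rewrite lt_def eq_sym tT.
have [e e0 he] := pd_open htau.
have dX := hd tau tau0.
have hnear : exists2 d, 0 < d & forall y, `|tau - y| < d ->
    forall i j, `|X y i j - X tau i j| < e.
  apply: near_ballR.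
  apply: (@filter_forall R _ (fun i y => forall j, `|X y i j - X tau i j| < e)
    (nbhs tau) _) => i.
  apply: (@filter_forall R _ (fun j y => `|X y i j - X tau i j| < e)
    (nbhs tau) _) => j.
  have := (@cvgrPdist_lt _ _ _ _ (nbhs_filter tau) _ _).1
    (is_derive_cont (entry_derive dX i j)) e e0.
  by apply: filterS => y; rewrite distrC.
have [d dp hd'] := hnear.
set s1 := Num.min (tau + d / 2) T.
have Ss1 : S s1.
  split.
    split; last by rewrite ge_min lexx orbT.
    by rewrite le_min T0 andbT addr_ge0 // divr_ge0 // ltW.
  move=> r r0 rs1; have [rlt|rge] := ltP r tau; first exact: hA.
  apply: he; first exact: symX r r0.
  apply: hd'; rewrite distrC ger0_norm ?subr_ge0 //.
  have : r <= tau + d / 2 by apply: le_trans rs1 _; rewrite ge_min lexx.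
  move=> h; apply: (@le_lt_trans _ _ (d / 2)); first by rewrite lerBlDl.
  by rewrite ltr_pdivrMr // ltr_pMr // ltr1n.
have := sup_upper_bound hS Ss1; rewrite -/tau.
by rewrite leNgt lt_min tlt andbT ltrDl divr_gt0.
Qed.
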